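(* Let $P=\{S_1,\ldots,S_n\}$ be a homothetic packing of $n$ squares with contact graph $G=([n],E)$. If $\{i,j,k\}$ is a clique in $G$, then $S_i\cap S_j\cap S_k$ consists of exactly one point.
   Context: Let $S=\{(x,y): -1\le x,y\le 1\}$. A homothetic packing of $n$ squares is a set $P=\{S_1,\ldots,S_n\}$ with $S_i=r_iS+p_i$, $r_i>0$, $p_i\in\mathbb{R}^2$, such that distinct squares have disjoint interiors. Its contact graph is $G=([n],E)$ where $\{i,j\}\in E$ iff $i\neq j$ and $S_i\cap S_j\neq\emptyset$. *)

(* Defs.v *)
From Stdlib Require Import Reals.
Open Scope R_scope.

Definition point := (R * R)%type.

Definition S0 (q : point) : Prop :=
  -1 <= fst q <= 1 /\ -1 <= snd q <= 1.

Definition hsq (r : R) (p : point) (q : point) : Prop :=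
  exists s : point, S0 s /\ q = (r * fst s + fst p, r * snd s + snd p).

Definition interior (A : point -> Prop) (q : point) : Prop :=
  exists eps : R, 0 < eps /\
    forall q' : point,
      (fst q' - fst q)^2 + (snd q' - snd q)^2 < eps^2 -> A q'.

Definition homothetic_packing (n : nat) (r : nat -> R) (p : nat -> point) : Prop :=
  (forall i, (i < n)%nat -> 0 < r i) /\
  (forall i j, (i < n)%nat -> (j < n)%nat -> i <> j ->
     ~ (exists q, interior (hsq (r i) (p i)) q /\ interior (hsq (r j) (p j)) q)).

Definition contact_edge (n : nat) (r : nat -> R) (p : nat -> point) (i j : nat) : Prop :=
  (i < n)%nat /\ (j < n)%nat /\ i <> j /\
  exists q, hsq (r i) (p i) q /\ hsq (r j) (p j) q.

Definition clique3 (n : nat) (r : nat -> R) (p : nat -> point) (i j k : nat) : Prop :=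
  i <> j /\ j <> k /\ i <> k /\
  contact_edge n r p i j /\ contact_edge n r p j k /\ contact_edge n r p i k.

(* Main.v *)
Require Import Defs.
From Stdlib Require Import Reals Lra Psatz Classical.
Open Scope R_scope.

Lemma hsq_iff r p q : 0 < r -> (hsq r p q <->
  (fst p - r <= fst q <= fst p + r /\ snd p - r <= snd q <= snd p + r)).
Proof.
  intros Hr; split.
  - intros [s [[H1 H2] ->]]; simpl; split; split; nra.
  - intros [[H1 H2] [H3 H4]].
    exists ((fst q - fst p)/r, (snd q - snd p)/r).
    assert (E1 : fst q - fst p = r * ((fst q - fst p)/r)) by (field; lra).
    assert (E2 : snd q - snd p = r * ((snd q - snd p)/r)) by (field; lra).
    set (u := (fst q - fst p)/r) in *. set (v := (snd q - snd p)/r) in *.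
    split.
    + unfold S0; simpl; split; split; nra.
    + destruct q as [q1 q2]; simpl in *; f_equal; lra.
Qed.

Lemma interior_box r p x y e : 0 < r -> 0 < e ->
  fst p - r <= x - e -> x + e <= fst p + r ->
  snd p - r <= y - e -> y + e <= snd p + r ->
  Defs.interior (hsq r p) (x, y).
Proof.
  intros Hr He H1 H2 H3 H4. exists e; split; [exact He|].
  intros q' Hq; simpl in Hq. apply hsq_iff; [exact Hr|].
  pose proof (pow2_ge_0 (fst q' - x)). pose proof (pow2_ge_0 (snd q' - y)).
  assert (A : (fst q' - x)^2 < e^2) by lra.
  assert (B : (snd q' - y)^2 < e^2) by lra.
  assert (A1 : - e < fst q' - x < e) by (split; nra).
  assert (B1 : - e < snd q' - y < e) by (split; nra).
  lra.
Qed.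

Lemma separation n r p i j : homothetic_packing n r p ->
  (i < n)%nat -> (j < n)%nat -> i <> j ->
  fst (p i) + r i <= fst (p j) - r j \/ fst (p j) + r j <= fst (p i) - r i \/
  snd (p i) + r i <= snd (p j) - r j \/ snd (p j) + r j <= snd (p i) - r i.
Proof.
  intros [Hpos Hdis] Hi Hj Hij.
  pose proof (Hpos i Hi) as ri. pose proof (Hpos j Hj) as rj.
  apply NNPP; intro Hn.
  apply (Hdis i j Hi Hj Hij).
  set (L1 := Rmax (fst (p i) - r i) (fst (p j) - r j)).
  set (U1 := Rmin (fst (p i) + r i) (fst (p j) + r j)).
  set (L2 := Rmax (snd (p i) - r i) (snd (p j) - r j)).
  set (U2 := Rmin (snd (p i) + r i) (snd (p j) + r j)).
  assert (HL1 : fst (p i) - r i <= L1 /\ fst (p j) - r j <= L1) by (split; [apply Rmax_l|apply Rmax_r]).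
  assert (HU1 : U1 <= fst (p i) + r i /\ U1 <= fst (p j) + r j) by (split; [apply Rmin_l|apply Rmin_r]).
  assert (HL2 : snd (p i) - r i <= L2 /\ snd (p j) - r j <= L2) by (split; [apply Rmax_l|apply Rmax_r]).
  assert (HU2 : U2 <= snd (p i) + r i /\ U2 <= snd (p j) + r j) by (split; [apply Rmin_l|apply Rmin_r]).
  assert (LU1 : L1 < U1).
  { unfold L1, U1, Rmax, Rmin.
    destruct (Rle_dec (fst (p i) - r i) (fst (p j) - r j));
    destruct (Rle_dec (fst (p i) + r i) (fst (p j) + r j)); lra. }
  assert (LU2 : L2 < U2).
  { unfold L2, U2, Rmax, Rmin.
    destruct (Rle_dec (snd (p i) - r i) (snd (p j) - r j));
    destruct (Rle_dec (snd (p i) + r i) (snd (p j) + r j)); lra. }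
  set (e := Rmin ((U1 - L1)/2) ((U2 - L2)/2)).
  assert (E1 : e <= (U1 - L1)/2) by apply Rmin_l.
  assert (E2 : e <= (U2 - L2)/2) by apply Rmin_r.
  assert (E0 : 0 < e) by (unfold e, Rmin; destruct Rle_dec; lra).
  exists ((L1+U1)/2, (L2+U2)/2); split;
  apply interior_box with e; lra.
Qed.

Lemma uniq_core (ai bi aj bj ak bk ci di cj dj ck dk x1 x2 y1 y2 : R) :
  ai < bi -> aj < bj -> ak < bk -> ci < di -> cj < dj -> ck < dk ->
  (bi <= aj \/ bj <= ai \/ di <= cj \/ dj <= ci) ->
  (bj <= ak \/ bk <= aj \/ dj <= ck \/ dk <= cj) ->
  (bi <= ak \/ bk <= ai \/ di <= ck \/ dk <= ci) ->
  ai <= x1 <= bi -> aj <= x1 <= bj -> ak <= x1 <= bk ->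
  ai <= x2 <= bi -> aj <= x2 <= bj -> ak <= x2 <= bk ->
  ci <= y1 <= di -> cj <= y1 <= dj -> ck <= y1 <= dk ->
  ci <= y2 <= di -> cj <= y2 <= dj -> ck <= y2 <= dk ->
  x1 = x2 /\ y1 = y2.
Proof.
  intros. destruct H5 as [?|[?|[?|?]]]; destruct H6 as [?|[?|[?|?]]];
  destruct H7 as [?|[?|[?|?]]]; split; lra.
Qed.

Lemma contact_ineq n r p i j : homothetic_packing n r p -> contact_edge n r p i j ->
  0 < r i /\ 0 < r j /\
  fst (p i) - r i <= fst (p j) + r j /\ fst (p j) - r j <= fst (p i) + r i /\
  snd (p i) - r i <= snd (p j) + r j /\ snd (p j) - r j <= snd (p i) + r i.
Proof.
  intros [Hpos _] [Hi [Hj [_ [q [H1 H2]]]]].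
  pose proof (Hpos i Hi). pose proof (Hpos j Hj).
  apply hsq_iff in H1; auto. apply hsq_iff in H2; auto. lra.
Qed.

Lemma max3 a b c : exists m, a <= m /\ b <= m /\ c <= m /\ (m = a \/ m = b \/ m = c).
Proof.
  destruct (Rle_dec a b); destruct (Rle_dec b c); destruct (Rle_dec a c).
  all: first [ exists a; lra | exists b; lra | exists c; lra ].
Qed.

Theorem lemma8 (n : nat) (r : nat -> R) (p : nat -> point) (i j k : nat) :
  homothetic_packing n r p ->
  clique3 n r p i j k ->
  exists q : point,
    (hsq (r i) (p i) q /\ hsq (r j) (p j) q /\ hsq (r k) (p k) q) /\
    forall q' : point,
      hsq (r i) (p i) q' /\ hsq (r j) (p j) q' /\ hsq (r k) (p k) q' -> q' = q.
Proof.
  intros HP [Hij [Hjk [Hik [Eij [Ejk Eik]]]]].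
  pose proof (contact_ineq _ _ _ _ _ HP Eij) as Cij.
  pose proof (contact_ineq _ _ _ _ _ HP Ejk) as Cjk.
  pose proof (contact_ineq _ _ _ _ _ HP Eik) as Cik.
  destruct Eij as [Hi [Hj _]]. destruct Ejk as [_ [Hk _]].
  pose proof (separation _ _ _ _ _ HP Hi Hj Hij) as Sij.
  pose proof (separation _ _ _ _ _ HP Hj Hk Hjk) as Sjk.
  pose proof (separation _ _ _ _ _ HP Hi Hk Hik) as Sik.
  destruct (max3 (fst (p i) - r i) (fst (p j) - r j) (fst (p k) - r k)) as [x0 Hx].
  destruct (max3 (snd (p i) - r i) (snd (p j) - r j) (snd (p k) - r k)) as [y0 Hy].
  assert (Hin : forall a, a = i \/ a = j \/ a = k ->
     fst (p a) - r a <= x0 <= fst (p a) + r a /\ snd (p a) - r a <= y0 <= snd (p a) + r a).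
  { intros a Ha. destruct Ha as [ -> | [ -> | -> ] ]; lra. }
  exists (x0, y0). split.
  - split; [|split]; apply hsq_iff; try lra; apply Hin; auto.
  - intros [x1 y1] [H1 [H2 H3]].
    apply hsq_iff in H1; [|lra]. apply hsq_iff in H2; [|lra]. apply hsq_iff in H3; [|lra].
    simpl in *.
    pose proof (Hin i (or_introl eq_refl)).
    pose proof (Hin j (or_intror (or_introl eq_refl))).
    pose proof (Hin k (or_intror (or_intror eq_refl))).
    assert (U : x1 = x0 /\ y1 = y0).
    { eapply (uniq_core (fst (p i) - r i) (fst (p i) + r i)
              (fst (p j) - r j) (fst (p j) + r j) (fst (p k) - r k) (fst (p k) + r k)
              (snd (p i) - r i) (snd (p i) + r i)
              (snd (p j) - r j) (snd (p j) + r j) (snd (p k) - r k) (snd (p k) + r k));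
      try lra; tauto. }
    destruct U as [-> ->]; reflexivity.
Qed.
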